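(* Let $V$ be a symmetric B-DMC, and suppose that for a given $N=2^n$ ($n\ge0$) and $i\in\{1,\dots,N\}$, $$\mathbb P_V\big[L_{V_N^{(i)}}(y_1^N)<1\big]\ge\mathbb P_V\big[L_{V_N^{(i)}}(y_1^N)>1\big].$$ Then for $j=2i-1$ and $j=2i$, $$\mathbb P_V\big[L_{V_{2N}^{(j)}}(y_1^{2N})<1\big]\ge\mathbb P_V\big[L_{V_{2N}^{(j)}}(y_1^{2N})>1\big].$$
   Context: A B-DMC $V:\{0,1\}\to\mathcal Y$ is given by transition probabilities $V(y|x)$, $\mathcal Y$ finite; $L_V(y)=V(y|1)/V(y|0)$. $V$ is symmetric if there is an involutive permutation $\pi$ of $\mathcal Y$ with $V(y|1)=V(\pi(y)|0)$ for all $y$. For a B-DMC $V$: $V^-(y_1y_2|u_1)=\sum_{u_2}\tfrac12V(y_1|u_1\oplus u_2)V(y_2|u_2)$, $V^+(y_1y_2u_1|u_2)=\tfrac12V(y_1|u_1\oplus u_2)V(y_2|u_2)$. Synthetic channels: $V_1^{(1)}=V$, $V_{2N}^{(2i-1)}=(V_N^{(i)})^-$, $V_{2N}^{(2i)}=(V_N^{(i)})^+$; an output of $V_N^{(i)}$ is written $(y_1^N,u_1^{i-1})$ as in Arıkan's construction and $L_{V_N^{(i)}}(y_1^N):=L_{V_N^{(i)}}(y_1^N,0_1^{i-1})$. With $L_1=L_{V_N^{(i)}}(y_1^N)$, $L_2=L_{V_N^{(i)}}(y_{N+1}^{2N})$: $L_{V_{2N}^{(2i-1)}}(y_1^{2N})=\frac{L_1+L_2}{1+L_1L_2}$,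 $L_{V_{2N}^{(2i)}}(y_1^{2N})=L_1L_2$. Notation: $V(y_1^N|0_1^N)=\prod_jV(y_j|0)$, $\mathbb P_V[E]=\sum_{y_1^N}V(y_1^N|0_1^N)\mathbf 1\{E\}$. *)

(* Defs.v *)
From HB Require Import structures.
From mathcomp Require Import all_boot all_order all_algebra.
Set Implicit Arguments. Unset Strict Implicit. Unset Printing Implicit Defensive.
Import Order.TTheory GRing.Theory Num.Theory.
Local Open Scope ring_scope.

(* A binary-input channel W : bool -> T -> R, W x t = W(t | x). *)
Definition chan (R : Type) (T : Type) := bool -> T -> R.

Section Channels.
Variable R : realFieldType.

Definition minus_chan (T : Type) (W : chan R T) : chan R (T * T) :=
  fun u1 t => \sum_(u2 : bool) 2^-1 * W (addb u1 u2) t.1 * W u2 t.2.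

(* V^+(t1 t2 u1 | u2) = 1/2 V(t1 | u1 xor u2) V(t2 | u2) *)
Definition plus_chan (T : Type) (W : chan R T) : chan R (T * T * bool) :=
  fun u2 t => 2^-1 * W (addb t.2 u2) t.1.1 * W u2 t.1.2.

Definition LRc (T : Type) (W : chan R T) (t : T) : R := W true t / W false t.
End Channels.

(* Output type of the synthetic channel V_{2^n}^{(k+1)} (0-based index k). *)
Fixpoint outT (Y : Type) (n k : nat) : Type :=
  match n with
  | 0 => Y
  | n'.+1 => if odd k then (outT Y n' k./2 * outT Y n' k./2 * bool)%type
             else (outT Y n' k./2 * outT Y n' k./2)%type
  end.

(* synth V n k = V_{2^n}^{(k+1)}, with V_{2N}^{(2i-1)} = (V_N^{(i)})^-,
   V_{2N}^{(2i)} = (V_N^{(i)})^+. *)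
Fixpoint synth (R : realFieldType) (Y : Type) (V : chan R Y) (n k : nat)
  : chan R (outT Y n k) :=
  match n return chan R (outT Y n k) with
  | 0 => V
  | n'.+1 =>
    if odd k as b return
       chan R (if b then (outT Y n' k./2 * outT Y n' k./2 * bool)%type
               else (outT Y n' k./2 * outT Y n' k./2)%type)
    then plus_chan (@synth R Y V n' k./2) else minus_chan (@synth R Y V n' k./2)
  end.

Arguments synth {R Y} V n k.

Lemma exp2_lo n : (2 ^ n <= 2 ^ n.+1)%N.
Proof. by rewrite expnS leq_pmull // expn_gt0. Qed.

Lemma exp2_hi n (t : 'I_(2 ^ n)) : (t + 2 ^ n < 2 ^ n.+1)%N.
Proof. by rewrite expnS mul2n -addnn ltn_add2r. Qed.

Definition lo_ord n (t : 'I_(2 ^ n)) : 'I_(2 ^ n.+1) := widen_ord (exp2_lo n) t.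
Definition hi_ord n (t : 'I_(2 ^ n)) : 'I_(2 ^ n.+1) := Ordinal (exp2_hi t).

(* The output (y_1^N, 0_1^{i-1}) of V_N^{(i)}: first half of y feeds the
   first copy, second half the second copy; all u's are 0 (= false). *)
Fixpoint mkout (Y : Type) (n k : nat) : ('I_(2 ^ n) -> Y) -> outT Y n k :=
  match n return ('I_(2 ^ n) -> Y) -> outT Y n k with
  | 0 => fun y => y ord0
  | n'.+1 => fun y =>
    let a := @mkout Y n' k./2 (fun t => y (lo_ord t)) in
    let b := @mkout Y n' k./2 (fun t => y (hi_ord t)) in
    if odd k as bb return
       (if bb then (outT Y n' k./2 * outT Y n' k./2 * bool)%type
        else (outT Y n' k./2 * outT Y n' k./2)%type)
    then (a, b, false) else (a, b)
  end.

Arguments mkout {Y} n k.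

(* L_{V_N^{(i)}}(y_1^N) with N = 2^n, 1 <= i <= N *)
Definition LR (R : realFieldType) (Y : Type) (V : chan R Y) (n i : nat)
  (y : 'I_(2 ^ n) -> Y) : R :=
  LRc (synth V n i.-1) (mkout n i.-1 y).
Arguments LR {R Y} V n i y.

Definition ProbV (R : realFieldType) (Y : finType) (V : chan R Y) (n : nat)
  (E : {ffun 'I_(2 ^ n) -> Y} -> bool) : R :=
  \sum_(y : {ffun 'I_(2 ^ n) -> Y} | E y) \prod_(j < 2 ^ n) V false (y j).
Arguments ProbV {R Y} V n E.

Definition is_BDMC (R : realFieldType) (Y : finType) (V : chan R Y) : Prop :=
  (forall x y, 0 <= V x y) /\ (forall x, \sum_(y : Y) V x y = 1).

Definition symmetric_chan (R : realFieldType) (Y : finType) (V : chan R Y) : Prop :=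
  exists pi : Y -> Y, involutive pi /\ forall y, V true y = V false (pi y).

(* Main.v *)
Require Import Defs.
From HB Require Import structures.
From mathcomp Require Import all_boot all_order all_algebra.
From mathcomp Require Import ring lra zify.
Set Implicit Arguments. Unset Strict Implicit. Unset Printing Implicit Defensive.
Import Order.TTheory GRing.Theory Num.Theory.
Local Open Scope ring_scope.

Section S.
Variables (R : realFieldType) (Y : finType) (V : chan R Y).
Hypothesis V0 : forall x y, 0 <= V x y.

Lemma synth_ge0 n k b t : 0 <= synth V n k b t.
Proof.
elim: n k b t => [|n IH] k b t /=; first exact: V0.
move: t; simpl; case: (odd k) => t.
- rewrite /plus_chan; by rewrite !mulr_ge0 // invr_ge0.
- rewrite /minus_chan; apply: sumr_ge0 => u _; by rewrite !mulr_ge0 // invr_ge0.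
Qed.

Lemma synth_pos n k (y : 'I_(2 ^ n) -> Y) : (forall j, 0 < V false (y j)) ->
  0 < synth V n k false (mkout n k y).
Proof.
elim: n k y => [|n IH] k y Hy /=; first exact: Hy.
have Ha := IH k./2 (fun t => y (lo_ord t)) (fun t => Hy _).
have Hb := IH k./2 (fun t => y (hi_ord t)) (fun t => Hy _).
case: (odd k).
- rewrite /plus_chan /=; by rewrite !mulr_gt0 // invr_gt0.
- rewrite /minus_chan big_bool /=.
  apply: ltr_wpDl; first by rewrite !mulr_ge0 ?invr_ge0 // synth_ge0.
  by rewrite !mulr_gt0 // invr_gt0.
Qed.

Lemma mkout_ext n k (f g : 'I_(2 ^ n) -> Y) : (forall t, f t = g t) -> mkout n k f = mkout n k g.
Proof.
elim: n k f g => [|n IH] k f g Hfg /=; first exact: Hfg.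
rewrite (IH _ (fun t => f (lo_ord t)) (fun t => g (lo_ord t))) //.
by rewrite (IH _ (fun t => f (hi_ord t)) (fun t => g (hi_ord t))).
Qed.

End S.

Lemma exp2S n : (2 ^ n.+1 = 2 ^ n + 2 ^ n)%N.
Proof. by rewrite expnS mul2n addnn. Qed.

Definition joinf (Y : finType) n (a b : {ffun 'I_(2 ^ n) -> Y}) : {ffun 'I_(2 ^ n.+1) -> Y} :=
  [ffun t => match split (cast_ord (exp2S n) t) with inl i => a i | inr j => b j end].

Definition lof (Y : finType) n (y : {ffun 'I_(2 ^ n.+1) -> Y}) : {ffun 'I_(2 ^ n) -> Y} :=
  [ffun t => y (lo_ord t)].
Definition hif (Y : finType) n (y : {ffun 'I_(2 ^ n.+1) -> Y}) : {ffun 'I_(2 ^ n) -> Y} :=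
  [ffun t => y (hi_ord t)].

Lemma join_lo (Y : finType) n a b t : @joinf Y n a b (lo_ord t) = a t.
Proof.
rewrite ffunE; case: splitP => [i /= Hi|j /= Hj]; first by congr (a _); apply: val_inj.
have := ltn_ord t; rewrite Hj; lia.
Qed.

Lemma join_hi (Y : finType) n a b t : @joinf Y n a b (hi_ord t) = b t.
Proof.
rewrite ffunE; case: splitP => [i /= Hi|j /= Hj].
  by have := ltn_ord i; rewrite -Hi; lia.
by congr (b _); apply: val_inj => /=; lia.
Qed.

Lemma sum_split (R : realFieldType) (Y : finType) n (F : {ffun 'I_(2 ^ n.+1) -> Y} -> R) :
  \sum_y F y = \sum_a \sum_b F (@joinf Y n a b).
Proof.
rewrite pair_bigA /=.
apply: (reindex (fun p => joinf p.1 p.2)).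
exists (fun y => (lof y, hif y)) => [[a b] _ | y _] /=.
  by congr pair; apply/ffunP => t; rewrite ffunE ?join_lo ?join_hi.
apply/ffunP => t; rewrite ffunE; case: splitP => [i /= Hi|j /= Hj]; rewrite ffunE;
  congr (y _); apply: val_inj => /=; lia.
Qed.

Lemma prod_half (R : realFieldType) m p (E : p = (m + m)%N) (F : 'I_p -> R) :
  \prod_(t < p) F t = (\prod_(t < m) F (cast_ord (esym E) (lshift m t))) *
                      \prod_(t < m) F (cast_ord (esym E) (rshift m t)).
Proof.
subst p; rewrite big_split_ord /=; congr (_ * _); apply: eq_bigr => i _; by rewrite cast_ord_id.
Qed.

Lemma prod_join (R : realFieldType) (Y : finType) n (f : Y -> R) a b :
  \prod_(t < 2 ^ n.+1) f (@joinf Y n a b t) = (\prod_(t < 2 ^ n) f (a t)) * \prod_(t < 2 ^ n) f (b t).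
Proof.
rewrite (prod_half (exp2S n)); congr (_ * _); apply: eq_bigr => t _.
  have -> : cast_ord (esym (exp2S n)) (lshift (2 ^ n) t) = lo_ord t by apply: val_inj.
  by rewrite join_lo.
have -> : cast_ord (esym (exp2S n)) (rshift (2 ^ n) t) = hi_ord t by apply: val_inj => /=; lia.
by rewrite join_hi.
Qed.

Lemma sum_base (R : realFieldType) (Y : finType) (F : Y -> R) :
  \sum_(y : {ffun 'I_(2 ^ 0) -> Y}) F (y ord0) = \sum_x F x.
Proof.
symmetry; apply: (reindex (fun y : {ffun 'I_(2 ^ 0) -> Y} => y ord0)).
exists (fun x => [ffun _ : 'I_(2 ^ 0) => x]) => [y _ | x _] /=; last by rewrite ffunE.
by apply/ffunP => t; rewrite ffunE; congr (y _); apply: val_inj => /=; case: t => [[]].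
Qed.

Definition oddf (R : realFieldType) (g : R -> R) := forall x, g (- x) = - g x.

Section Abs.
Variables (R : realFieldType) (A B : finType) (wa : A -> R) (wb : B -> R) (Da : A -> R) (Db : B -> R).
Hypothesis SA : forall g, oddf g -> \sum_a wa a * (1 + Da a) * g (Da a) = 0.
Hypothesis SB : forall g, oddf g -> \sum_b wb b * (1 + Db b) * g (Db b) = 0.

Lemma TA (G : R -> R -> R) : (forall x y, G (- x) y = - G x y) ->
  \sum_a \sum_b wa a * wb b * ((1 + Da a) * (1 + Db b)) * G (Da a) (Db b) = 0.
Proof.
move=> HG; rewrite exchange_big /=; apply: big1 => b _.
transitivity (wb b * (1 + Db b) * \sum_a wa a * (1 + Da a) * (fun x => G x (Db b)) (Da a)).
  rewrite mulr_sumr; apply: eq_bigr => a _ /=; ring.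
by rewrite (SA (g := fun x => G x (Db b))) ?mulr0 // => x; apply: HG.
Qed.

Lemma TB (G : R -> R -> R) : (forall x y, G x (- y) = - G x y) ->
  \sum_a \sum_b wa a * wb b * ((1 + Da a) * (1 + Db b)) * G (Da a) (Db b) = 0.
Proof.
move=> HG; apply: big1 => a _.
transitivity (wa a * (1 + Da a) * \sum_b wb b * (1 + Db b) * (fun y => G (Da a) y) (Db b)).
  rewrite mulr_sumr; apply: eq_bigr => b _ /=; ring.
by rewrite (SB (g := fun y => G (Da a) y)) ?mulr0 // => y; apply: HG.
Qed.

Lemma minus_sym g : oddf g ->
  \sum_a \sum_b wa a * wb b * (1 + - (Da a * Db b)) * g (- (Da a * Db b)) = 0.
Proof.
move=> Hg.
pose P x := g (- x).
have HP : oddf P by rewrite /oddf /P => x; rewrite opprK Hg opprK.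
have E1 : \sum_a \sum_b wa a * wb b * (1 + Da a) * P (Da a * Db b) = 0.
  rewrite exchange_big /=; apply: big1 => b _.
  transitivity (wb b * \sum_a wa a * (1 + Da a) * (fun x => P (x * Db b)) (Da a)).
    rewrite mulr_sumr; apply: eq_bigr => a _ /=; ring.
  by rewrite (SA (g := fun x => P (x * Db b))) ?mulr0 // => x; rewrite mulNr HP.
have E2 : \sum_a \sum_b wa a * wb b * (1 + Db b) * (Da a * P (Da a * Db b)) = 0.
  apply: big1 => a _.
  transitivity (wa a * \sum_b wb b * (1 + Db b) * (fun y => Da a * P (Da a * y)) (Db b)).
    rewrite mulr_sumr; apply: eq_bigr => b _ /=; ring.
  by rewrite (SB (g := fun y => Da a * P (Da a * y))) ?mulr0 // => y; rewrite mulrN HP mulrN.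
transitivity ((\sum_a \sum_b wa a * wb b * (1 + Da a) * P (Da a * Db b)) -
   \sum_a \sum_b wa a * wb b * (1 + Db b) * (Da a * P (Da a * Db b))); last first.
  by rewrite E1 E2 subr0.
rewrite -sumrB; apply: eq_bigr => a _; rewrite -sumrB; apply: eq_bigr => b _.
rewrite /P; ring.
Qed.

Lemma plus_sym (H : R -> R -> R) : (forall x y, H (- x) (- y) = - H x y) ->
  \sum_a \sum_b wa a * wb b * ((1 + Da a) * (1 + Db b)) * H (Da a) (Db b) = 0.
Proof.
move=> HH.
pose G1 x y := (H x y - H (- x) y) / 2.
pose G2 x y := (H x y + H (- x) y) / 2.
have E1 : \sum_a \sum_b wa a * wb b * ((1 + Da a) * (1 + Db b)) * G1 (Da a) (Db b) = 0.
  by apply: TA => x y; rewrite /G1 opprK; field.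
have E2 : \sum_a \sum_b wa a * wb b * ((1 + Da a) * (1 + Db b)) * G2 (Da a) (Db b) = 0.
  by apply: TB => x y; rewrite /G2 -[in H x (- y)](opprK x) !HH; field.
transitivity ((\sum_a \sum_b wa a * wb b * ((1 + Da a) * (1 + Db b)) * G1 (Da a) (Db b)) +
  \sum_a \sum_b wa a * wb b * ((1 + Da a) * (1 + Db b)) * G2 (Da a) (Db b)); last first.
  by rewrite E1 E2 addr0.
rewrite -big_split; apply: eq_bigr => a _; rewrite -big_split; apply: eq_bigr => b _.
by rewrite /G1 /G2 /=; field.
Qed.
End Abs.

Section Alg.
Variable R : realFieldType.

Lemma nz_of_pos (x : R) : 0 < x -> x != 0.
Proof. by move=> h; rewrite gt_eqF. Qed.

Lemma alg_minus (x0 x1 y0 y1 : R) : 0 < x0 -> 0 <= x1 -> 0 < y0 -> 0 <= y1 ->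
  ((2^-1 * x0 * y1 + 2^-1 * x1 * y0) - (2^-1 * x1 * y1 + 2^-1 * x0 * y0)) /
  ((2^-1 * x0 * y1 + 2^-1 * x1 * y0) + (2^-1 * x1 * y1 + 2^-1 * x0 * y0))
  = - ((x1 - x0) / (x1 + x0) * ((y1 - y0) / (y1 + y0))).
Proof.
move=> hx0 hx1 hy0 hy1.
have h1 : x1 + x0 != 0 by apply: nz_of_pos; lra.
have h2 : y1 + y0 != 0 by apply: nz_of_pos; lra.
have -> : (2^-1 * x0 * y1 + 2^-1 * x1 * y0) + (2^-1 * x1 * y1 + 2^-1 * x0 * y0)
   = 2^-1 * ((x1 + x0) * (y1 + y0)) by ring.
field; rewrite ?h1 ?h2 //.
Qed.

Lemma alg_plus (x0 x1 y0 y1 : R) (g : R -> R) : 0 < x0 -> 0 <= x1 -> 0 < y0 -> 0 <= y1 ->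
  let D := (2^-1 * x1 * y1 - 2^-1 * x0 * y0) / (2^-1 * x1 * y1 + 2^-1 * x0 * y0) in
  let da := (x1 - x0) / (x1 + x0) in let db := (y1 - y0) / (y1 + y0) in
  (1 + D) * g D = ((1 + da) * (1 + db)) * (g ((da + db) / (1 + da * db)) / (1 + da * db)).
Proof.
move=> hx0 hx1 hy0 hy1 D da db.
have h1 : x1 + x0 != 0 by apply: nz_of_pos; lra.
have h2 : y1 + y0 != 0 by apply: nz_of_pos; lra.
have h3 : x1 * y1 + x0 * y0 != 0 by apply: nz_of_pos; nra.
have e0 : 1 + da * db = 2 * (x1 * y1 + x0 * y0) / ((x1 + x0) * (y1 + y0)).
  rewrite /da /db; field; rewrite ?h1 ?h2 //.
have h4 : 1 + da * db != 0.
  rewrite e0; apply: nz_of_pos; apply: divr_gt0; first by nra.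
  by apply: mulr_gt0; lra.
have e1 : (da + db) / (1 + da * db) = D.
  rewrite e0 /da /db /D; field; rewrite ?h1 ?h2 ?h3 //.
rewrite e1; have e2 : (1 + da) * (1 + db) = (1 + D) * (1 + da * db).
  rewrite e0 /da /db /D; field; rewrite ?h1 ?h2 ?h3 //.
rewrite e2; field; rewrite ?h4 //.
Qed.
End Alg.

Section Main.
Variables (R : realFieldType) (Y : finType) (V : chan R Y).
Hypothesis V0 : forall x y, 0 <= V x y.

Definition Wv n k u (y : {ffun 'I_(2 ^ n) -> Y}) := synth V n k u (mkout n k y).
Arguments Wv : clear implicits.
Definition Dv n k y := (Wv n k true y - Wv n k false y) / (Wv n k true y + Wv n k false y).
Arguments Dv : clear implicits.
Definition wt n (y : {ffun 'I_(2 ^ n) -> Y}) := \prod_(j < 2 ^ n) V false (y j).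
Arguments wt : clear implicits.

Lemma Wv_plus n k u a b : odd k ->
  Wv n.+1 k u (joinf a b) = 2^-1 * Wv n k./2 u a * Wv n k./2 u b.
Proof.
rewrite /Wv /=.
rewrite (mkout_ext _ (fun t => join_lo a b t)) (mkout_ext _ (fun t => join_hi a b t)).
by case: (odd k).
Qed.

Lemma Wv_minus n k u a b : ~~ odd k ->
  Wv n.+1 k u (joinf a b) = 2^-1 * Wv n k./2 (addb u true) a * Wv n k./2 true b
     + 2^-1 * Wv n k./2 (addb u false) a * Wv n k./2 false b.
Proof.
rewrite /Wv /=.
rewrite (mkout_ext _ (fun t => join_lo a b t)) (mkout_ext _ (fun t => join_hi a b t)).
by case: (odd k) => // _; rewrite /minus_chan big_bool.
Qed.


Definition Sym n k := forall g, oddf g ->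
  \sum_(y : {ffun 'I_(2 ^ n) -> Y}) wt n y * (1 + Dv n k y) * g (Dv n k y) = 0.

Lemma wt_pos n y : wt n y != 0 -> forall j, 0 < V false (y j).
Proof. by rewrite /wt => /prodf_neq0 h j; rewrite lt0r h ?V0. Qed.

Lemma Wv0_pos n k y : wt n y != 0 -> 0 < Wv n k false y.
Proof. by move=> h; apply: synth_pos => //; apply: wt_pos. Qed.

Lemma Wv_ge0 n k u y : 0 <= Wv n k u y.
Proof. exact: synth_ge0. Qed.

Lemma wt_join n a b : wt n.+1 (joinf a b) = wt n a * wt n b.
Proof. by rewrite /wt prod_join. Qed.

Lemma symS n k : (forall k, Sym n k) -> Sym n.+1 k.
Proof.
move=> IH g Hg; rewrite sum_split.
case: (boolP (odd k)) => Hk.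
- pose H x y := g ((x + y) / (1 + x * y)) / (1 + x * y).
  transitivity (\sum_a \sum_b wt n a * wt n b * ((1 + Dv n k./2 a) * (1 + Dv n k./2 b))
      * H (Dv n k./2 a) (Dv n k./2 b)); last first.
    apply: (plus_sym (IH k./2) (IH k./2)) => x y.
    by rewrite /H mulrNN -opprD mulNr Hg mulNr.
  apply: eq_bigr => a _; apply: eq_bigr => b _.
  rewrite wt_join; have [->|Hab] := eqVneq (wt n a * wt n b) 0; first by rewrite !mul0r.
  move: Hab; rewrite mulf_eq0 negb_or => /andP[Ha Hb].
  rewrite /Dv !Wv_plus // -mulrA -[RHS]mulrA; congr (_ * _).
  by apply: alg_plus; rewrite ?Wv0_pos ?Wv_ge0.
- transitivity (\sum_a \sum_b wt n a * wt n b * (1 + - (Dv n k./2 a * Dv n k./2 b))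
      * g (- (Dv n k./2 a * Dv n k./2 b))); last first.
    exact: (minus_sym (IH k./2) (IH k./2)).
  apply: eq_bigr => a _; apply: eq_bigr => b _.
  rewrite wt_join; have [->|Hab] := eqVneq (wt n a * wt n b) 0; first by rewrite !mul0r.
  move: Hab; rewrite mulf_eq0 negb_or => /andP[Ha Hb].
  rewrite /Dv !Wv_minus //=.
  by rewrite alg_minus ?Wv0_pos ?Wv_ge0.
Qed.


Lemma sym0 (pi : Y -> Y) : involutive pi -> (forall y, V true y = V false (pi y)) ->
  forall k, Sym 0 k.
Proof.
move=> Hinv Hpi k g Hg.
pose d x := (V true x - V false x) / (V true x + V false x).
pose c x := V false x * (1 + d x) * g (d x).
transitivity (\sum_(y : {ffun 'I_(2 ^ 0) -> Y}) c (y ord0)).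
  by apply: eq_bigr => y _; rewrite /wt /Dv /Wv /= big_ord1.
rewrite sum_base.
have Hc : forall x, c (pi x) = - c x.
  move=> x; rewrite /c /d.
  have e1 : V true (pi x) = V false x by rewrite Hpi Hinv.
  have e0 : V false (pi x) = V true x by rewrite Hpi.
  rewrite e1 e0.
  have -> : (V false x - V true x) / (V false x + V true x) =
            - ((V true x - V false x) / (V true x + V false x)).
    by rewrite -mulNr opprB; congr (_ / _); rewrite addrC.
  rewrite Hg.
  have hp := V0 false x; have hq := V0 true x.
  have [Hs|Hs] := eqVneq (V true x + V false x) 0.
    have -> : V true x = 0 by lra.
    have -> : V false x = 0 by lra.
    by rewrite !mul0r oppr0.
  field; by rewrite Hs.
have E : \sum_x c x = \sum_x c (pi x).
  apply: reindex_inj; exact: (can_inj Hinv).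
have E2 : \sum_x c (pi x) = - \sum_x c x.
  rewrite -sumrN; apply: eq_bigr => x _; exact: Hc.
lra.
Qed.

Lemma sym_all (pi : Y -> Y) : involutive pi -> (forall y, V true y = V false (pi y)) ->
  forall n k, Sym n k.
Proof.
move=> Hinv Hpi n; elim: n => [|n IH] k; first exact: sym0 Hinv Hpi k.
exact: symS.
Qed.

End Main.
Arguments Wv {R Y} V n k u y.
Arguments Dv {R Y} V n k y.
Arguments wt {R Y} V n y.

Lemma final (R : realFieldType) (Y : finType) (V : chan R Y)
  (hV : is_BDMC V) (hsym : symmetric_chan V) (n j : nat) :
    ProbV V n (fun y => 1 < LR V n j y) <= ProbV V n (fun y => LR V n j y < 1).
Proof.
case: hV => V0 _; case: hsym => pi [Hinv Hpi].
set k := j.-1.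
have S := sym_all V0 Hinv Hpi n k (g := Num.sg) (fun x => sgrN x).
have E : forall y : {ffun 'I_(2 ^ n) -> Y},
  ((if 1 < LR V n j y then wt V n y else 0) - (if LR V n j y < 1 then wt V n y else 0))
  = wt V n y * Num.sg (Dv V n k y).
  move=> y; have [->|Hw] := eqVneq (wt V n y) 0; first by rewrite mul0r !if_same subr0.
  have h0 := Wv0_pos V0 k Hw; have h1 := Wv_ge0 V0 k true y.
  rewrite /LR /LRc -/k -/(Wv V n k true y) -/(Wv V n k false y).
  rewrite ltr_pdivlMr // ltr_pdivrMr // !mul1r /Dv sgrM sgrV.
  rewrite (gtr0_sg (x := Wv V n k true y + Wv V n k false y)); last by lra.
  rewrite mulr1.
  case: (ltrgtP (Wv V n k true y) (Wv V n k false y)) => H.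
  - by rewrite ltr0_sg ?sub0r ?mulrN1 //; lra.
  - by rewrite gtr0_sg ?subr0 ?mulr1 //; lra.
  - by rewrite H !subrr sgr0 mulr0.
have P : ProbV V n (fun y => 1 < LR V n j y) - ProbV V n (fun y => LR V n j y < 1)
   = \sum_y wt V n y * Num.sg (Dv V n k y).
  rewrite /ProbV !(big_mkcond (fun y => _ < _)) -sumrB; apply: eq_bigr => y _; exact: E.
have Q : \sum_y wt V n y * (1 + Dv V n k y) * Num.sg (Dv V n k y)
   = \sum_y wt V n y * Num.sg (Dv V n k y) + \sum_y wt V n y * `|Dv V n k y|.
  rewrite -big_split; apply: eq_bigr => y _ /=; rewrite normrEsg; ring.
have Pos : 0 <= \sum_y wt V n y * `|Dv V n k y|.
  apply: sumr_ge0 => y _; apply: mulr_ge0 => //; exact: prodr_ge0.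
lra.
Qed.

Unset Implicit Arguments.

Theorem proposition3 (R : realFieldType) (Y : finType) (V : chan R Y)
  (hV : is_BDMC V) (hsym : symmetric_chan V) (n i : nat)
  (hi : (1 <= i <= 2 ^ n)%N)
  (hyp : ProbV V n (fun y => 1 < LR V n i y) <= ProbV V n (fun y => LR V n i y < 1)) :
  forall j : nat, (j = 2 * i - 1)%N \/ (j = 2 * i)%N ->
    ProbV V n.+1 (fun y : {ffun 'I_(2 ^ n.+1) -> Y} => 1 < LR V n.+1 j y)
      <= ProbV V n.+1 (fun y : {ffun 'I_(2 ^ n.+1) -> Y} => LR V n.+1 j y < 1).
Proof.
move=> j _; exact: final hV hsym n.+1 j.
Qed.
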